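(* Let $\mathcal{A}$ and $\mathcal{U}$ be Banach algebras, $\theta$ a nonzero character on $\mathcal{A}$, $\mathcal{X}$ a simple Banach $(\mathcal{A}\times_{\theta}\mathcal{U})$-bimodule, and $D:\mathcal{A}\times_{\theta}\mathcal{U}\to\mathcal{X}$ a derivation. Then $D$ is continuous if either of the following holds: (i) $\mathrm{ann}_{\mathcal{X}}\mathcal{U}\neq\mathcal{X}$ and $Z_{\mathcal{X}}(\mathcal{A})\neq\mathcal{X}$; (ii) $\mathrm{ann}_{\mathcal{X}}\mathcal{U}=\{0\}$ and $Z_{\mathcal{X}}(\mathcal{A})\neq\mathcal{X}$.
   Context: The Lau product $\mathcal{A}\times_{\theta}\mathcal{U}$ is $\mathcal{A}\times\mathcal{U}$ with norm $\|(a,u)\|=\|a\|+\|u\|$ and product $(a,u)(a',u')=(aa',\theta(a)u'+\theta(a')u+uu')$. $\mathcal{X}$ is an $\mathcal{A}$-bimodule via $ax=(a,0)x$, $xa=x(a,0)$ and a $\mathcal{U}$-bimodule via $ux=(0,u)x$, $xu=x(0,u)$. Simple means the only closed $(\mathcal{A}\times_{\theta}\mathcal{U})$-subbimodules of $\mathcal{X}$ are $\{0\}$ and $\mathcal{X}$. $\mathrm{ann}_{\mathcal{X}}\mathcal{U}=\{x: ux=xu=0\ \forall u\in\mathcal{U}\}$; $Z_{\mathcal{X}}(\mathcal{A})=\{x: ax=xa\ \forall a\in\mathcal{A}\}$. *)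

(* Defs.v *)
From HB Require Import structures.
From mathcomp Require Import all_boot all_order all_algebra.
From mathcomp Require Import all_classical all_reals all_analysis.
From mathcomp Require Import complex.
Import Order.TTheory GRing.Theory Num.Theory.
Import numFieldNormedType.Exports.

Set Implicit Arguments.
Unset Strict Implicit.
Unset Printing Implicit Defensive.

Local Open Scope ring_scope.
Local Open Scope classical_set_scope.

Section BanachAlgebras.
Variable K : numFieldType.

Definition banach_algebra (A : completeNormedModType K) (mul : A -> A -> A)
  : Prop :=
  ((forall a b c, mul a (mul b c) = mul (mul a b) c) /\
      (forall a b c, mul (a + b) c = mul a c + mul b c) /\
      (forall a b c, mul a (b + c) = mul a b + mul a c) /\
      (forall (k : K) a b, mul (k *: a) b = k *: mul a b) /\
      (forall (k : K) a b, mul a (k *: b) = k *: mul a b) /\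
      (forall a b, `|mul a b| <= `|a| * `|b|)).

Definition character (A : completeNormedModType K) (mul : A -> A -> A)
  (theta : A -> K) : Prop :=
  ((forall a b, theta (a + b) = theta a + theta b) /\
      (forall (k : K) a, theta (k *: a) = k * theta a) /\
      (forall a b, theta (mul a b) = theta a * theta b) /\
      (exists a, theta a != 0)).

Section Lau.
Variables (A U : completeNormedModType K).

Definition lau_mul (theta : A -> K) (mulA : A -> A -> A) (mulU : U -> U -> U)
  (p q : A * U) : A * U :=
  (mulA p.1 q.1, theta p.1 *: q.2 + theta q.1 *: p.2 + mulU p.2 q.2).

Definition lau_norm (p : A * U) : K := `|p.1| + `|p.2|.

Variable X : completeNormedModType K.
Variables (mulB : A * U -> A * U -> A * U).
Variables (lm : A * U -> X -> X) (rm : X -> A * U -> X).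

Definition banach_bimodule : Prop :=
  ((forall p q x, lm (p + q) x = lm p x + lm q x) /\
      (forall p x y, lm p (x + y) = lm p x + lm p y) /\
      (forall (k : K) p x, lm (k *: p) x = k *: lm p x) /\
      (forall (k : K) p x, lm p (k *: x) = k *: lm p x) /\
      (forall p q x, rm x (p + q) = rm x p + rm x q) /\
      (forall p x y, rm (x + y) p = rm x p + rm y p) /\
      (forall (k : K) p x, rm x (k *: p) = k *: rm x p) /\
      (forall (k : K) p x, rm (k *: x) p = k *: rm x p) /\
      (forall p q x, lm (mulB p q) x = lm p (lm q x)) /\
      (forall p q x, rm x (mulB p q) = rm (rm x p) q) /\
      (forall p q x, rm (lm p x) q = lm p (rm x q)) /\
      (forall p x, `|lm p x| <= lau_norm p * `|x|) /\
      (forall p x, `|rm x p| <= lau_norm p * `|x|)).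

Definition closed_subbimodule (S : set X) : Prop :=
  (S 0 /\
      (forall x y, S x -> S y -> S (x + y)) /\
      (forall (k : K) x, S x -> S (k *: x)) /\
      (forall p x, S x -> S (lm p x)) /\
      (forall p x, S x -> S (rm x p)) /\
      closed S).

Definition simple_bimodule : Prop :=
  forall S : set X, closed_subbimodule S -> S = [set 0] \/ S = setT.

Definition ann_U : set X :=
  [set x | forall u : U, lm (0, u) x = 0 /\ rm x (0, u) = 0].

Definition centre_A : set X :=
  [set x | forall a : A, lm (a, 0) x = rm x (a, 0)].

Definition derivation (D : A * U -> X) : Prop :=
  ((forall p q, D (p + q) = D p + D q) /\
      (forall (k : K) p, D (k *: p) = k *: D p) /\
      (forall p q, D (mulB p q) = rm (D p) q + lm p (D q))).

End Lau.
End BanachAlgebras.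

(* Main.v *)
Require Import Defs.
From HB Require Import structures.
From mathcomp Require Import all_boot all_order all_algebra.
From mathcomp Require Import all_classical all_reals all_analysis.
From mathcomp Require Import complex.
From mathcomp Require Import ring lra.
From Stdlib Require Classical_Prop.
Import Order.TTheory GRing.Theory Num.Theory.
Import numFieldNormedType.Exports.
Local Open Scope ring_scope.
Local Open Scope classical_set_scope.
Section NR.
Context {R : realType}.
Local Notation C := (R[i]).
Local Notation "x %:C" := (real_complex R x) (format "x %:C").


Lemma Cnorm_real (z : C) : 0 <= z -> z = (complex.Re z)%:C.
Proof. by move=> z0; rewrite RRe_real // ger0_real. Qed.

Definition nr {V : normedZmodType C} (x : V) : R := complex.Re `|x|.

Lemma nrE {V : normedZmodType C} (x : V) : `|x| = (nr x)%:C.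
Proof. by rewrite /nr -Cnorm_real. Qed.

Lemma nr_ge0 {V : normedZmodType C} (x : V) : 0 <= nr x.
Proof. by rewrite -ler0c -nrE. Qed.

Lemma nrD {V : normedZmodType C} (x y : V) : nr (x + y) <= nr x + nr y.
Proof. by rewrite -lecR rmorphD /= -!nrE ler_normD. Qed.

Lemma nrN {V : normedZmodType C} (x : V) : nr (- x) = nr x.
Proof. by rewrite /nr normrN. Qed.

Lemma nrB {V : normedZmodType C} (x y : V) : nr (x - y) = nr (y - x).
Proof. by rewrite -nrN opprB. Qed.

Lemma nr0 {V : normedZmodType C} : nr (0 : V) = 0.
Proof. by rewrite /nr normr0. Qed.

Lemma nr_eq0 {V : normedZmodType C} (x : V) : nr x = 0 -> x = 0.
Proof. by move=> h; apply/eqP; rewrite -normr_eq0 nrE h. Qed.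

Lemma nrZ {V : normedModType C} (k : C) (x : V) : nr (k *: x) = nr k * nr x.
Proof. by apply: complexI; rewrite rmorphM /= -!nrE normrZ. Qed.

Lemma nrC (c : R) : nr (c%:C : C) = `|c|.
Proof.
apply: complexI; rewrite -nrE.
have [c0|c0] := leP 0 c.
  by rewrite !ger0_norm // ler0c.
rewrite !ltr0_norm ?ltcR //; by rewrite rmorphN.
Qed.

Lemma nr_prod1 {U V : normedZmodType C} (p : U * V) : nr p.1 <= nr p.
Proof.
rewrite -lecR -!nrE prod_normE /Order.max; case: ifPn => h //; exact: ltW.
Qed.

Lemma nr_prod2 {U V : normedZmodType C} (p : U * V) : nr p.2 <= nr p.
Proof.
rewrite -lecR -!nrE prod_normE /Order.max; case: ifPn => h //.
by rewrite real_leNgt ?normr_real.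
Qed.

End NR.
Section Conv.
Context {R : realType}.
Local Notation C := (R[i]).
Local Notation "x %:C" := (real_complex R x) (format "x %:C").

Definition conv {V : normedZmodType C} (s : nat -> V) (l : V) :=
  forall e : R, 0 < e -> exists N, forall n, (N <= n)%N -> nr (s n - l) < e.

Lemma conv_uniq {V : normedZmodType C} (s : nat -> V) a b :
  conv s a -> conv s b -> a = b.
Proof.
move=> ha hb; apply/eqP; rewrite -subr_eq0; apply/eqP/nr_eq0.
apply/eqP; rewrite eq_le nr_ge0 andbT.
apply/ler_addgt0Pr => e e0; rewrite add0r.
have e20 : 0 < e / 2 by rewrite divr_gt0.
have [N1 h1] := ha _ e20; have [N2 h2] := hb _ e20.
have := h1 (maxn N1 N2) (leq_maxl _ _); have := h2 (maxn N1 N2) (leq_maxr _ _).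
set y := s _ => q1 q2.
have : nr (a - b) <= nr (a - y) + nr (y - b).
  by have := nrD (a - y) (y - b); rewrite addrA subrK.
rewrite nrB in q2. lra.
Qed.

Lemma conv_lip {V W : normedZmodType C} (s : nat -> V) (l : V) (t : nat -> W) (m : W) (c : R) :
  0 <= c -> (forall n, nr (t n - m) <= c * nr (s n - l)) -> conv s l -> conv t m.
Proof.
move=> c0 h hs e e0.
have ce0 : 0 < e / (c + 1) by rewrite divr_gt0 // ltr_wpDl.
have [N hN] := hs _ ce0; exists N => n /hN q.
apply: (le_lt_trans (h n)).
have c1 : 0 < c + 1 by rewrite ltr_wpDl.
have : c * nr (s n - l) <= (c + 1) * nr (s n - l).
  by rewrite ler_wpM2r ?nr_ge0 // lerDl.
move/le_lt_trans; apply.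
by rewrite mulrC -ltr_pdivlMr.
Qed.

Lemma conv_add {V : normedZmodType C} (s t : nat -> V) a b :
  conv s a -> conv t b -> conv (fun n => s n + t n) (a + b).
Proof.
move=> ha hb e e0.
have e20 : 0 < e / 2 by rewrite divr_gt0.
have [N1 h1] := ha _ e20; have [N2 h2] := hb _ e20.
exists (maxn N1 N2) => n hn.
have q1 := h1 n (leq_trans (leq_maxl _ _) hn).
have q2 := h2 n (leq_trans (leq_maxr _ _) hn).
have := nrD (s n - a) (t n - b).
have -> : s n + t n - (a + b) = s n - a + (t n - b) by rewrite opprD addrACA.
lra.
Qed.

Lemma conv_cst {V : normedZmodType C} (a : V) : conv (fun _ => a) a.
Proof. by move=> e e0; exists 0%N => n _; rewrite subrr nr0. Qed.

Lemma conv_opp {V : normedZmodType C} (s : nat -> V) a :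
  conv s a -> conv (fun n => - s n) (- a).
Proof.
apply: (@conv_lip _ _ _ _ _ _ 1) => // n.
by rewrite -opprD nrN mul1r.
Qed.

Lemma conv_eq {V : normedZmodType C} (s t : nat -> V) a :
  (forall n, s n = t n) -> conv s a -> conv t a.
Proof.
move=> h; apply: (@conv_lip _ _ _ _ _ _ 1) => // n.
by rewrite h mul1r.
Qed.

Lemma conv_cauchy {V : completeNormedModType C} (s : nat -> V) :
  (forall e : R, 0 < e -> exists N, forall n m, (N <= n)%N -> (N <= m)%N -> nr (s n - s m) < e) ->
  exists l, conv s l.
Proof.
move=> hc.
have : cvg (s @ \oo).
  apply: cauchy_cvg; apply: cauchy_exP => e e0.
  have er : e \is Num.real by apply: gtr0_real.
  have e0' : 0 < complex.Re e by rewrite -ltcR RRe_real.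
  have [N hN] := hc _ e0'.
  exists (s N); exists N => // n /= hn.
  rewrite -ball_normE /ball_ /= nrE -(RRe_real er) ltcR.
  exact: hN.
move=> /cvg_ex [l hl]; exists l => e e0.
move/cvgrPdist_lt: hl => /(_ (e%:C)).
rewrite ltcR => /(_ e0) [N _ HN]; exists N => n /HN.
by rewrite nrE ltcR nrB.
Qed.

Lemma closed_by {V : normedModType C} (S : set V) :
  (forall x, (forall e : R, 0 < e -> exists y, S y /\ nr (x - y) < e) -> S x) ->
  closed S.
Proof.
move=> h x cx; apply: h => e e0.
have e0' : 0 < e%:C by rewrite ltcR.
have [y [Sy By]] := cx _ (nbhsx_ballx x _ e0').
exists y; split => //.
by move: By; rewrite -ball_normE /ball_ /= nrE ltcR.
Qed.

Lemma bounded_continuous {V W : normedModType C} (f : V -> W) (c : R) :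
  (forall x y, f (x - y) = f x - f y) -> (forall x, nr (f x) <= c * nr x) ->
  continuous f.
Proof.
move=> fB fb x; apply/cvgrPdist_lt => e e0.
have er : e \is Num.real by apply: gtr0_real.
have e0' : 0 < complex.Re e by rewrite -ltcR RRe_real.
have c1 : 0 < `|c| + 1 by rewrite ltr_wpDl.
have d0 : 0 < (complex.Re e / (`|c| + 1))%:C by rewrite ltcR divr_gt0.
apply: (filterS _ (nbhsx_ballx x _ d0)) => y.
rewrite -ball_normE /ball_ /= nrE ltcR => hy.
rewrite -(RRe_real er) nrE ltcR -fB.
apply: (le_lt_trans (fb _)).
have : c * nr (x - y) <= (`|c| + 1) * nr (x - y).
  rewrite ler_wpM2r ?nr_ge0 //; have := ler_norm c; lra.
move/le_lt_trans; apply.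
by rewrite mulrC -ltr_pdivlMr.
Qed.
End Conv.
Section BaireCat.
Context {R : realType}.
Local Notation C := (R[i]).
Local Notation "x %:C" := (real_complex R x) (format "x %:C").

Lemma two_pow_ge (k : nat) : (k.+1)%:R <= (2 : R) ^+ k.
Proof. by rewrite -natrX ler_nat ltn_expl. Qed.

Lemma small_radius (e : R) : 0 < e -> exists k : nat, forall r : R, 0 <= r -> r * (2 : R) ^+ k <= 1 -> 2 * r < e.
Proof.
move=> e0; exists (Num.truncn (2 / e)) => r r0 hr.
set k := Num.truncn (2 / e) in hr *.
have h1 : 2 / e < k.+1%:R by apply: truncnS_gt.
have h2 := two_pow_ge k.
have h3 : 2 < e * k.+1%:R by rewrite mulrC -ltr_pdivrMr.
have h4 : r * k.+1%:R <= 1 by apply: le_trans hr; rewrite ler_wpM2l.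
have h5 : 0 < k.+1%:R :> R by [].
nra.
Qed.

Lemma baire_cat {V : completeNormedModType C} (Cn : nat -> set V) :
  (forall x, exists n, Cn n x) ->
  exists n x0 (r : R), 0 < r /\ forall y, nr (y - x0) < r ->
     forall e : R, 0 < e -> exists z, Cn n z /\ nr (y - z) < e.
Proof.
move=> cov; apply: Classical_Prop.NNPP => H.
have neg : forall n x0 (r : R), 0 < r -> exists y (e : R),
    [/\ nr (y - x0) < r, 0 < e & forall z, Cn n z -> e <= nr (y - z)].
  move=> n x0 r r0; apply: Classical_Prop.NNPP => H2; apply: H.
  exists n, x0, r; split => // y hy e e0.
  apply: Classical_Prop.NNPP => H3; apply: H2; exists y, e; split => // z Cz.
  rewrite leNgt; apply/negP => lt; apply: H3; by exists z.
have step : forall kp : nat * (V * R), exists q : V * R, 0 < kp.2.2 ->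
   [/\ 0 < q.2, q.2 <= kp.2.2 / 2,
       (forall w, nr (w - q.1) <= q.2 -> nr (w - kp.2.1) < kp.2.2) &
       (forall z, Cn kp.1 z -> 2 * q.2 < nr (q.1 - z))].
  move=> [k [x r]] /=.
  have [r0|r0] := ltP 0 r; last by exists (x, r) => /=; rewrite ltNge r0.
  have [y [e [hy e0 hz]]] := neg k x r r0.
  pose r' := Num.min (e / 3) (Num.min ((r - nr (y - x)) / 2) (r / 2)).
  have h1 : r' <= e / 3 by rewrite ge_min lexx.
  have h2 : r' <= (r - nr (y - x)) / 2 by rewrite ge_min ge_min lexx orbT.
  have h3 : r' <= r / 2 by rewrite ge_min ge_min lexx !orbT.
  have h0 : 0 < r'.
    rewrite !lt_min !divr_gt0 //; lra.
  exists (y, r') => _ /=; split => //.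
    move=> w hw.
    have := nrD (w - y) (y - x); rewrite addrA subrK; lra.
  move=> z /hz; lra.
have [f Pf] := choice step.
pose fix ar n := if n is p.+1 then f (p, ar p) else ((0 : V), (1 : R)).
have pos : forall k, 0 < (ar k).2.
  elim => [|k IH] /=; first exact: ltr01.
  by have [] := Pf (k, ar k) IH.
have Pk : forall k, [/\ (ar k.+1).2 <= (ar k).2 / 2,
       (forall w, nr (w - (ar k.+1).1) <= (ar k.+1).2 -> nr (w - (ar k).1) < (ar k).2) &
       (forall z, Cn k z -> 2 * (ar k.+1).2 < nr ((ar k.+1).1 - z))].
  by move=> k; have [] := Pf (k, ar k) (pos k).
have nest : forall d k, nr ((ar (k + d)%N).1 - (ar k).1) <= (ar k).2.
  elim => [|d IH] k.
    by rewrite addn0 subrr nr0 ltW.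
  rewrite addnS -addSn; have [_ hw _] := Pk k.
  by apply/ltW/hw/IH.
have rb : forall k, (ar k).2 * (2 : R) ^+ k <= 1.
  elim => [|k IH]; first by rewrite /= expr0 mulr1.
  have [h _ _] := Pk k.
  rewrite exprS.
  have hp : 0 <= (2 : R) ^+ k by rewrite exprn_ge0.
  have : (ar k.+1).2 * (2 * 2 ^+ k) <= (ar k).2 / 2 * (2 * 2 ^+ k).
    by rewrite ler_wpM2r // mulr_ge0.
  have -> : (ar k).2 / 2 * (2 * 2 ^+ k) = (ar k).2 * 2 ^+ k.
    by rewrite mulrA -(mulrA _ _ 2) mulVf ?mulr1 // pnatr_eq0.
  move=> q; exact: le_trans q IH.
pose x := fun k => (ar k).1.
have [l hl] : exists l, conv x l.
  apply: conv_cauchy => e e0.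
  have [k hk] := small_radius e e0.
  exists k => n m hn hm.
  have q1 := nest (n - k)%N k; have q2 := nest (m - k)%N k.
  rewrite subnKC // in q1; rewrite subnKC // in q2.
  have q3 := hk _ (ltW (pos k)) (rb k).
  have := nrD (x n - (ar k).1) ((ar k).1 - x m).
  rewrite addrA subrK nrB in q2 * => q4.
  rewrite /x; lra.
have lb : forall k, nr (l - (ar k).1) <= (ar k).2.
  move=> k; apply/ler_addgt0Pr => e e0.
  have [N hN] := hl _ e0.
  have q1 := hN (maxn N k) (leq_maxl _ _).
  have q2 := nest (maxn N k - k)%N k.
  rewrite subnKC ?leq_maxr // in q2.
  have := nrD (l - x (maxn N k)) (x (maxn N k) - (ar k).1).
  rewrite addrA subrK; rewrite nrB /x in q1; rewrite /x; lra.
have [n Cl] := cov l.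
have [_ _ h] := Pk n.
have := h _ Cl; have := lb n.+1; have := pos n.+1; rewrite nrB; lra.
Qed.
End BaireCat.
Section ClosedGraph.
Context {R : realType}.
Local Notation C := (R[i]).
Local Notation "x %:C" := (real_complex R x) (format "x %:C").

Lemma zid (G : zmodType) (x a b c : G) : a - (b - c) = x + a - b - (x - c).
Proof.
rewrite !opprB addrC -!addrA.
rewrite (addrC c (-x)) (addrCA (-b) (-x)) (addrCA a (-x)) addNKr.
by rewrite addrCA [c + a]addrC addrCA.
Qed.

Lemma eqW (a b : R) : a = b -> a <= b.
Proof. by move=> ->. Qed.

Lemma pow_small (a e : R) : 0 < e -> exists k : nat, forall m, (k <= m)%N -> a / (2 : R) ^+ m < e.
Proof.
move=> e0; exists (Num.truncn (a / e)) => m km.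
have h1 : a / e < (Num.truncn (a / e)).+1%:R by apply: truncnS_gt.
have h2 : (Num.truncn (a / e)).+1%:R <= m.+1%:R :> R by rewrite ler_nat.
have h3 := two_pow_ge (R := R) m.
have p0 : 0 < (2 : R) ^+ m by rewrite exprn_gt0.
rewrite ltr_pdivrMr //.
have : a / e < (2 : R) ^+ m by lra.
by rewrite ltr_pdivrMr // mulrC.
Qed.

Lemma nrCZ {V : normedModType C} (t : R) (x : V) : 0 <= t -> nr (t%:C *: x) = t * nr x.
Proof. by move=> t0; rewrite nrZ nrC ger0_norm. Qed.

Lemma closed_graph {V W : completeNormedModType C} (f : V -> W) :
  (forall x y, f (x + y) = f x + f y) -> (forall (k : C) x, f (k *: x) = k *: f x) ->
  (forall (s : nat -> V) (y : W), conv s 0 -> conv (fun n => f (s n)) y -> y = 0) ->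
  exists c : R, forall x, nr (f x) <= c * nr x.
Proof.
move=> fD fZ fC.
have f0 : f 0 = 0.
  by apply: (@addrI _ (f 0)); rewrite -fD !addr0.
have fB : forall x y, f (x - y) = f x - f y.
  move=> x y; rewrite fD; congr (_ + _).
  by apply: (@addrI _ (f y)); rewrite -fD !subrr.
pose Cn := fun n : nat => [set v | nr (f v) <= n%:R].
have cov : forall x, exists n, Cn n x.
  move=> x; exists (Num.truncn (nr (f x))).+1; rewrite /Cn /=.
  exact/ltW/truncnS_gt.
have [n [x0 [r [r0 hB]]]] := baire_cat Cn cov.
pose M : R := 4 * n%:R / r.
have M0 : 0 <= M by rewrite /M mulr_ge0 // ?invr_ge0 ?ltW // mulr_ge0.
have approx : forall v (eps : R), 0 < eps -> exists w, nr (f w) <= M * nr v /\ nr (v - w) < eps.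
  move=> v eps e0.
  have [->|vn0] := eqVneq v 0.
    exists 0; rewrite f0 subr0 !nr0 mulr0; split => //.
  have d0 : 0 < nr v.
    rewrite lt_def nr_ge0 andbT; apply/eqP => /nr_eq0 h; by rewrite h eqxx in vn0.
  pose t := 2 * nr v / r.
  have t0 : 0 < t by rewrite /t divr_gt0 // mulr_gt0.
  pose v' := (t^-1)%:C *: v.
  have nv' : nr v' = r / 2.
    have ti0 : 0 <= t^-1 by rewrite invr_ge0 ltW.
    rewrite /v' (nrCZ _ _ ti0) /t invfM invrK.
    by field; rewrite lt0r_neq0 // ?nr_ge0.
  have ee0 : 0 < eps / (2 * t) by rewrite divr_gt0 // mulr_gt0.
  have [z1 [Cz1 hz1]] : exists z, Cn n z /\ nr (x0 + v' - z) < eps / (2 * t).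
    apply: hB => //; rewrite addrAC subrr add0r nv'; lra.
  have [z2 [Cz2 hz2]] : exists z, Cn n z /\ nr (x0 - z) < eps / (2 * t).
    apply: hB => //; rewrite subrr nr0.
    exact: r0.
  rewrite /Cn /= in Cz1 Cz2.
  exists (t%:C *: (z1 - z2)); split.
    rewrite fZ (nrCZ _ _ (ltW t0)) fB.
    have := nrD (f z1) (- f z2); rewrite nrN => q.
    have : t * nr (f z1 - f z2) <= t * (2 * n%:R).
      rewrite ler_pM2l //; lra.
    move/le_trans; apply; rewrite /M /t.
    apply/eqW; field; exact: lt0r_neq0.
  have -> : v - t%:C *: (z1 - z2) = t%:C *: ((x0 + v' - z1) - (x0 - z2)).
    have tv : t%:C *: v' = v.
      by rewrite /v' scalerA -rmorphM /= mulfV ?lt0r_neq0 // rmorph1 scale1r.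
    by rewrite -[in LHS]tv -scalerBr (zid _ x0).
  rewrite (nrCZ _ _ (ltW t0)).
  have := nrD (x0 + v' - z1) (- (x0 - z2)); rewrite nrN => q.
  have : t * nr (x0 + v' - z1 - (x0 - z2)) < t * (eps / t).
    rewrite ltr_pM2l //; apply: (le_lt_trans q).
    have -> : eps / t = eps / (2 * t) + eps / (2 * t).
      field; exact: lt0r_neq0.
    by rewrite ltrD.
  move/lt_le_trans; apply; apply/eqW; field; exact: lt0r_neq0.
exists (2 * M) => v.
have [->|vn0] := eqVneq v 0; first by rewrite f0 !nr0 mulr0.
have d0 : 0 < nr v.
  rewrite lt_def nr_ge0 andbT; apply/eqP => /nr_eq0 h; by rewrite h eqxx in vn0.
pose h := fun k : nat => nr v / (2 : R) ^+ k.
have h0 : forall k, 0 < h k by move=> k; rewrite divr_gt0 // exprn_gt0.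
have hS : forall k, h k.+1 = h k / 2.
  move=> k; rewrite /h exprS; field; rewrite expf_neq0 // pnatr_eq0.
have step : forall p : V * R, exists w, 0 < p.2 -> nr (f w) <= M * nr p.1 /\ nr (p.1 - w) < p.2.
  move=> [p e] /=; have [e0|e0] := ltP 0 e.
    by have [w hw] := approx p e e0; exists w.
  by exists 0 => hh; exfalso; move: hh.
have [g Pg] := choice step.
pose fix rem k := if k is k'.+1 then rem k' - g (rem k', h k'.+1) else v.
have remS : forall k, rem k.+1 = rem k - g (rem k, h k.+1) by [].
have remb : forall k, nr (rem k) <= h k.
  case => [|k]; first by rewrite /h expr0 divr1.
  have [_ q] := Pg (rem k, h k.+1) (h0 _).
  by rewrite remS; apply/ltW.
have fwb : forall k, nr (f (g (rem k, h k.+1))) <= M * h k.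
  move=> k; have [q _] := Pg (rem k, h k.+1) (h0 _).
  by apply: (le_trans q); rewrite ler_wpM2l // remb.
have cauchy : forall d k, nr (f (rem k) - f (rem (k + d)%N)) <= 2 * M * h k - 2 * M * h (k + d)%N.
  elim => [|d IH] k; first by rewrite addn0 subrr nr0 subrr.
  rewrite addnS remS fB.
  have := nrD (f (rem k) - f (rem (k + d)%N)) (f (g (rem (k + d)%N, h (k + d)%N.+1))).
  have -> : forall a b c : W, a - (b - c) = a - b + c.
    by move=> a b c; rewrite opprB addrA addrAC.
  move=> q.
  apply: (le_trans q).
  apply: le_trans (lerD (IH k) (fwb (k + d)%N)) _.
  by rewrite hS; apply/eqW; field.
have remc : conv rem 0.
  move=> e e0; have [K hK] := pow_small (nr v) e e0.
  exists K => m /hK q; rewrite subr0; apply: le_lt_trans q; exact: remb.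
have [y hy] : exists y, conv (fun k => f (rem k)) y.
  apply: conv_cauchy => e e0.
  have [K hK] := pow_small (4 * M * nr v) e e0.
  exists K => a b ha hb.
  have q1 := cauchy (a - K)%N K; have q2 := cauchy (b - K)%N K.
  rewrite subnKC // in q1; rewrite subnKC // in q2.
  have q3 := nrD (f (rem a) - f (rem K)) (f (rem K) - f (rem b)).
  rewrite addrA subrK (nrB (f (rem a)) (f (rem K))) in q3.
  have q4 := hK K (leqnn K).
  have E : 4 * M * nr v / 2 ^+ K = 2 * (2 * M * h K).
    by rewrite /h; field; rewrite expf_neq0 // pnatr_eq0.
  have Mh : forall k, 0 <= 2 * M * h k.
    by move=> k; apply: mulr_ge0; [apply: mulr_ge0 | exact: ltW (h0 k)].
  have := Mh a; have := Mh b.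
  lra.
have y0 : y = 0 := fC _ _ remc hy.
rewrite y0 in hy.
apply/ler_addgt0Pr => e e0.
have [N hN] := hy e e0.
have q := cauchy N 0%N; rewrite add0n in q.
have q2 := hN N (leqnn N); rewrite subr0 in q2.
have q3 := nrD (f (rem 0%N) - f (rem N)) (f (rem N)); rewrite subrK /= in q3.
have E : 2 * M * h 0%N = 2 * M * nr v by rewrite /h expr0 divr1.
have : 0 <= 2 * M * h N.
  by apply: mulr_ge0; [apply: mulr_ge0 | exact: ltW (h0 N)].
lra.
Qed.
End ClosedGraph.
Section Generic.
Context {R : realType}.
Local Notation C := (R[i]).

Lemma addB0 {G H : zmodType} (f : G -> H) :
  (forall x y, f (x + y) = f x + f y) -> f 0 = 0.
Proof. by move=> fD; apply: (@addrI _ (f 0)); rewrite -fD !addr0. Qed.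

Lemma addBB {G H : zmodType} (f : G -> H) :
  (forall x y, f (x + y) = f x + f y) -> forall x y, f (x - y) = f x - f y.
Proof.
move=> fD x y; rewrite fD; congr (_ + _).
by apply: (@addrI _ (f y)); rewrite -fD !subrr (@addB0 _ _ f fD).
Qed.

Lemma closed_zero {X : normedModType C} {I : Type} (g : I -> X -> X) (S : set X) :
  (forall x, (forall i, g i x = 0) -> S x) ->
  (forall x, S x -> forall i, g i x = 0) ->
  (forall i x y, g i (x - y) = g i x - g i y) ->
  (forall i, exists c : R, forall x, nr (g i x) <= c * nr x) -> closed S.
Proof.
move=> h1 h2 gB gb; apply: closed_by => x hx; apply: h1 => i.
have [c hc] := gb i.
apply: nr_eq0; apply/eqP; rewrite eq_le nr_ge0 andbT.
apply/ler_addgt0Pr => e e0; rewrite add0r.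
have c1 : 0 < `|c| + 1 by rewrite ltr_wpDl.
have ce : 0 < e / (`|c| + 1) by rewrite divr_gt0.
have [y [Sy hy]] := hx _ ce.
have -> : g i x = g i (x - y) by rewrite gB (h2 _ Sy) subr0.
apply: (le_trans (hc _)).
have : c * nr (x - y) <= (`|c| + 1) * nr (x - y).
  rewrite ler_wpM2r ?nr_ge0 //; have := ler_norm c; lra.
move/le_trans; apply.
by rewrite mulrC -ler_pdivlMr //; apply: ltW.
Qed.
End Generic.
Section Main.
Context {R : realType}.
Local Notation C := (R[i]).
Variables (A U X : completeNormedModType C)
  (mulA : A -> A -> A) (mulU : U -> U -> U) (theta : A -> C)
  (lm : (A * U)%type -> X -> X) (rm : X -> (A * U)%type -> X) (D : (A * U)%type -> X).
Variable hA : banach_algebra mulA.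
Variable hU : banach_algebra mulU.
Variable hth : character mulA theta.
Variable hX : banach_bimodule (lau_mul theta mulA mulU) lm rm.
Local Notation mulB := (lau_mul theta mulA mulU).

Lemma mulA0l a : mulA 0 a = 0.
Proof. by have [_ [h _]] := hA; apply: (@addrI _ (mulA 0 a)); rewrite -h !addr0. Qed.
Lemma mulA0r a : mulA a 0 = 0.
Proof. by have [_ [_ [h _]]] := hA; apply: (@addrI _ (mulA a 0)); rewrite -h !addr0. Qed.
Lemma mulU0l a : mulU 0 a = 0.
Proof. by have [_ [h _]] := hU; apply: (@addrI _ (mulU 0 a)); rewrite -h !addr0. Qed.
Lemma mulU0r a : mulU a 0 = 0.
Proof. by have [_ [_ [h _]]] := hU; apply: (@addrI _ (mulU a 0)); rewrite -h !addr0. Qed.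
Lemma th0 : theta 0 = 0.
Proof. by have [h _] := hth; apply: (@addrI _ (theta 0)); rewrite -h !addr0. Qed.
Lemma thM a b : theta (mulA a b) = theta a * theta b.
Proof. by have [_ [_ [h _]]] := hth. Qed.

Lemma LU1 u p : mulB (0, u) p = (0, theta p.1 *: u + mulU u p.2).
Proof. by rewrite /lau_mul /= mulA0l th0 scale0r add0r. Qed.
Lemma LU2 u p : mulB p (0, u) = (0, theta p.1 *: u + mulU p.2 u).
Proof. by rewrite /lau_mul /= mulA0r th0 scale0r addr0. Qed.
Lemma LA1 a b v : mulB (a, 0) (b, v) = (mulA a b, theta a *: v).
Proof. by rewrite /lau_mul /= scaler0 addr0 mulU0l addr0. Qed.
Lemma LA2 a b v : mulB (b, v) (a, 0) = (mulA b a, theta a *: v).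
Proof. by rewrite /lau_mul /= scaler0 add0r mulU0r addr0. Qed.

Lemma pd (a : A) (u : U) : (a, u) = (a, 0) + (0, u).
Proof. by rewrite [RHS]/(_ + _) /= /add_pair /= addr0 add0r. Qed.
Lemma pdA (a b : A) : ((a + b), (0 : U)) = (a, 0) + (b, 0).
Proof. by rewrite [RHS]/(_ + _) /= /add_pair /= addr0. Qed.
Lemma pdU (a b : U) : ((0 : A), a + b) = (0, a) + (0, b).
Proof. by rewrite [RHS]/(_ + _) /= /add_pair /= addr0. Qed.
Lemma pzU (k : C) (u : U) : k *: ((0 : A), u) = (0, k *: u).
Proof. by rewrite [LHS]/( _ *: _) /= /scale_pair /= scaler0. Qed.
Lemma pzA (k : C) (a : A) : k *: (a, (0 : U)) = (k *: a, 0).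
Proof. by rewrite [LHS]/( _ *: _) /= /scale_pair /= scaler0. Qed.

Lemma lmDp p q x : lm (p + q) x = lm p x + lm q x.
Proof. by case: hX. Qed.
Lemma lmDx p x y : lm p (x + y) = lm p x + lm p y.
Proof. by case: hX => _ []. Qed.
Lemma lmZp k p x : lm (k *: p) x = k *: lm p x.
Proof. by case: hX => _ [_ []]. Qed.
Lemma lmZx k p x : lm p (k *: x) = k *: lm p x.
Proof. by case: hX => _ [_ [_ []]]. Qed.
Lemma rmDp p q x : rm x (p + q) = rm x p + rm x q.
Proof. by case: hX => _ [_ [_ [_ []]]]. Qed.
Lemma rmDx p x y : rm (x + y) p = rm x p + rm y p.
Proof. by case: hX => _ [_ [_ [_ [_ []]]]]. Qed.
Lemma rmZp k p x : rm x (k *: p) = k *: rm x p.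
Proof. by case: hX => _ [_ [_ [_ [_ [_ []]]]]]. Qed.
Lemma rmZx k p x : rm (k *: x) p = k *: rm x p.
Proof. by case: hX => _ [_ [_ [_ [_ [_ [_ []]]]]]]. Qed.
Lemma lmM p q x : lm (mulB p q) x = lm p (lm q x).
Proof. by case: hX => _ [_ [_ [_ [_ [_ [_ [_ []]]]]]]]. Qed.
Lemma rmM p q x : rm x (mulB p q) = rm (rm x p) q.
Proof. by case: hX => _ [_ [_ [_ [_ [_ [_ [_ [_ []]]]]]]]]. Qed.
Lemma lrC p q x : rm (lm p x) q = lm p (rm x q).
Proof. by case: hX => _ [_ [_ [_ [_ [_ [_ [_ [_ [_ []]]]]]]]]]. Qed.
Lemma lmb p x : nr (lm p x) <= (nr p.1 + nr p.2) * nr x.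
Proof.
have [_ [_ [_ [_ [_ [_ [_ [_ [_ [_ [_ [h _]]]]]]]]]]]] := hX.
by move: (h p x); rewrite /lau_norm !nrE -rmorphD -rmorphM lecR.
Qed.
Lemma rmb p x : nr (rm x p) <= (nr p.1 + nr p.2) * nr x.
Proof.
have [_ [_ [_ [_ [_ [_ [_ [_ [_ [_ [_ [_ h]]]]]]]]]]]] := hX.
by move: (h p x); rewrite /lau_norm !nrE -rmorphD -rmorphM lecR.
Qed.

Lemma lmx0 p : lm p 0 = 0. Proof. exact: (@addB0 _ _ (lm p) (lmDx p)). Qed.
Lemma lmxB p x y : lm p (x - y) = lm p x - lm p y. Proof. exact: (@addBB _ _ (lm p) (lmDx p)). Qed.
Lemma rmx0 p : rm 0 p = 0. Proof. exact: (@addB0 _ _ (fun z => rm z p) (fun x y => rmDx p x y)). Qed.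
Lemma rmxB p x y : rm (x - y) p = rm x p - rm y p.
Proof. exact: (@addBB _ _ (fun z => rm z p) (fun x y => rmDx p x y) x y). Qed.
Lemma lm0x x : lm 0 x = 0. Proof. exact: (@addB0 _ _ (fun p => lm p x) (fun p q => lmDp p q x)). Qed.
Lemma rm0x x : rm x 0 = 0. Proof. exact: (@addB0 _ _ (fun p => rm x p) (fun p q => rmDp p q x)). Qed.

Lemma lm_split a u x : lm (a, u) x = lm (a, 0) x + lm (0, u) x.
Proof. by rewrite {1}pd lmDp. Qed.
Lemma rm_split a u x : rm x (a, u) = rm x (a, 0) + rm x (0, u).
Proof. by rewrite {1}pd rmDp. Qed.

Lemma L_a_0v a v x : lm (a, 0) (lm (0, v) x) = theta a *: lm (0, v) x.
Proof. by rewrite -lmM LU2 /= mulU0l addr0 -pzU lmZp. Qed.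
Lemma L_0u_a u a x : lm (0, u) (lm (a, 0) x) = theta a *: lm (0, u) x.
Proof. by rewrite -lmM LU1 /= mulU0r addr0 -pzU lmZp. Qed.
Lemma R_0v_a v a x : rm (rm x (0, v)) (a, 0) = theta a *: rm x (0, v).
Proof. by rewrite -rmM LU1 /= mulU0r addr0 -pzU rmZp. Qed.
Lemma R_a_0v a v x : rm (rm x (a, 0)) (0, v) = theta a *: rm x (0, v).
Proof. by rewrite -rmM LU2 /= mulU0l addr0 -pzU rmZp. Qed.
Lemma L_a_b a b x : lm (a, 0) (lm (b, 0) x) = lm (mulA a b, 0) x.
Proof. by rewrite -lmM LA1 scaler0. Qed.
Lemma R_b_a b a x : rm (rm x (b, 0)) (a, 0) = rm x (mulA b a, 0).
Proof. by rewrite -rmM LA2 scaler0. Qed.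
Lemma L_0u_p u p x : lm (0, u) (lm p x) = lm (0, theta p.1 *: u + mulU u p.2) x.
Proof. by rewrite -lmM LU1. Qed.
Lemma R_p_0u u p x : rm (rm x p) (0, u) = rm x (0, theta p.1 *: u + mulU p.2 u).
Proof. by rewrite -rmM LU2. Qed.


Lemma zid2 (G : zmodType) (a b c d : G) : (a - b) - (c - d) = (a - c) - (b - d).
Proof. by rewrite !opprB addrACA [RHS]addrACA [- b - c]addrC. Qed.

Variable hS : simple_bimodule lm rm.
Variable hD : derivation mulB lm rm D.

Lemma mk_sub (I : Type) (g : I -> X -> X) (S : set X) :
 (forall x, S x <-> forall i, g i x = 0) ->
 (forall i x y, g i (x + y) = g i x + g i y) ->
 (forall i (k : C) x, g i (k *: x) = k *: g i x) ->
 (forall i, exists c : R, forall x, nr (g i x) <= c * nr x) ->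
 (forall p x, S x -> S (lm p x)) -> (forall p x, S x -> S (rm x p)) ->
 S = [set 0] \/ S = setT.
Proof.
move=> hSg gD gZ gb hl hr; apply: hS.
split; first by apply/hSg => i; exact: (@addB0 _ _ (g i) (gD i)).
split; first by move=> x y /hSg hx /hSg hy; apply/hSg => i; rewrite gD hx hy addr0.
split; first by move=> k x /hSg hx; apply/hSg => i; rewrite gZ hx scaler0.
split; first exact: hl.
split; first exact: hr.
apply: (closed_zero g) => [x /hSg // | x /hSg // | i x y | //].
exact: (@addBB _ _ (g i) (gD i)).
Qed.

Definition NL : set X := [set x | forall u : U, lm (0, u) x = 0].
Definition NR : set X := [set x | forall u : U, rm x (0, u) = 0].
Definition Ms : set X :=
  [set x | forall a : A, lm (a, 0) x = theta a *: x /\ rm x (a, 0) = theta a *: x].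

Lemma ann_cases : ann_U lm rm = [set 0] \/ ann_U lm rm = setT.
Proof.
apply: (@mk_sub (bool * U)%type (fun i x => if i.1 then lm (0, i.2) x else rm x (0, i.2))).
- move=> x; split => [h [[] u] /= | h u]; [by case: (h u) | by case: (h u) | ].
  by split; [exact: (h (true, u)) | exact: (h (false, u))].
- by case => [[] u] x y /=; [exact: lmDx | exact: rmDx].
- by case => [[] u] k x /=; [exact: lmZx | exact: rmZx].
- by case => [[] u]; exists (nr (0 : A) + nr u) => x /=; [exact: lmb | exact: rmb].
- move=> p x hx u; split.
    by rewrite L_0u_p; case: (hx (theta p.1 *: u + mulU u p.2)).
  by rewrite lrC; case: (hx u) => _ ->; rewrite lmx0.
- move=> p x hx u; split.
    by rewrite -lrC; case: (hx u) => -> _; rewrite rmx0.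
  by rewrite R_p_0u; case: (hx (theta p.1 *: u + mulU p.2 u)).
Qed.

Lemma NL_cases : NL = [set 0] \/ NL = setT.
Proof.
apply: (@mk_sub U (fun u x => lm (0, u) x)).
- by [].
- by move=> u x y; exact: lmDx.
- by move=> u k x; exact: lmZx.
- by move=> u; exists (nr (0 : A) + nr u) => x; exact: lmb.
- by move=> p x hx u; rewrite L_0u_p hx.
- by move=> p x hx u; rewrite -lrC hx rmx0.
Qed.

Lemma NR_cases : NR = [set 0] \/ NR = setT.
Proof.
apply: (@mk_sub U (fun u x => rm x (0, u))).
- by [].
- by move=> u x y; exact: rmDx.
- by move=> u k x; exact: rmZx.
- by move=> u; exists (nr (0 : A) + nr u) => x; exact: rmb.
- by move=> p x hx u; rewrite lrC hx lmx0.
- by move=> p x hx u; rewrite R_p_0u hx.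
Qed.

Lemma bLA a x : nr (lm (a, 0) x - theta a *: x) <= (nr a + nr (0 : U) + nr (theta a)) * nr x.
Proof.
have := nrD (lm (a, 0) x) (- (theta a *: x)); rewrite nrN nrZ.
have := lmb (a, 0) x; rewrite /= => q1 q2; lra.
Qed.
Lemma bRA a x : nr (rm x (a, 0) - theta a *: x) <= (nr a + nr (0 : U) + nr (theta a)) * nr x.
Proof.
have := nrD (rm x (a, 0)) (- (theta a *: x)); rewrite nrN nrZ.
have := rmb (a, 0) x; rewrite /= => q1 q2; lra.
Qed.

Lemma M_cases : Ms = [set 0] \/ Ms = setT.
Proof.
apply: (@mk_sub (bool * A)%type (fun i x => if i.1 then lm (i.2, 0) x - theta i.2 *: x
                                               else rm x (i.2, 0) - theta i.2 *: x)).
- move=> x; split => [h [[] a] /= | h a]; [by case: (h a) => -> _; rewrite subrr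
                                         | by case: (h a) => _ ->; rewrite subrr | ].
  have := h (true, a); have := h (false, a); rewrite /= => /eqP + /eqP.
  by rewrite !subr_eq0 => /eqP -> /eqP ->.
- case => [[] a] x y /=.
    by rewrite lmDx scalerDr opprD addrACA.
  by rewrite rmDx scalerDr opprD addrACA.
- case => [[] a] k x /=.
    by rewrite lmZx scalerBr !scalerA mulrC.
  by rewrite rmZx scalerBr !scalerA mulrC.
- case => [[] a]; exists (nr a + nr (0 : U) + nr (theta a)) => x /=; [exact: bLA | exact: bRA].
- move=> [b v] x hx a; split.
    rewrite (lm_split b v x) lmDx L_a_0v (proj1 (hx b)) lmZx (proj1 (hx a)) scalerDr.
    by congr (_ + _); rewrite !scalerA mulrC.
  by rewrite lrC (proj2 (hx a)) lmZx.
- move=> [b v] x hx a; split.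
    by rewrite -lrC (proj1 (hx a)) rmZx.
  rewrite (rm_split b v x) rmDx R_0v_a (proj2 (hx b)) rmZx (proj2 (hx a)) scalerDr.
  by congr (_ + _); rewrite !scalerA mulrC.
Qed.

Lemma dD p q : D (p + q) = D p + D q. Proof. by case: hD. Qed.
Lemma dZ (k : C) p : D (k *: p) = k *: D p. Proof. by case: hD => _ []. Qed.
Lemma dM p q : D (mulB p q) = rm (D p) q + lm p (D q). Proof. by case: hD => _ []. Qed.

Lemma D_id1 u a : rm (D (0, u)) (a, 0) + lm (0, u) (D (a, 0)) = theta a *: D (0, u).
Proof. by rewrite -dM LU1 /= mulU0r addr0 -pzU dZ. Qed.
Lemma D_id2 a u : rm (D (a, 0)) (0, u) + lm (a, 0) (D (0, u)) = theta a *: D (0, u).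
Proof. by rewrite -dM LU2 /= mulU0l addr0 -pzU dZ. Qed.


Lemma fin_cont (cA cU : R) :
  (forall a, nr (D (a, 0)) <= cA * nr a) -> (forall u, nr (D (0, u)) <= cU * nr u) ->
  continuous D.
Proof.
move=> hA' hU'.
apply: (@bounded_continuous _ _ _ D (`|cA| + `|cU|)).
  exact: (@addBB _ _ D dD).
move=> [a u]; rewrite (pd a u) dD.
have q := nrD (D (a, 0)) (D (0, u)).
have q1 := hA' a; have q2 := hU' u.
have p1 := nr_prod1 (a, u); have p2 := nr_prod2 (a, u); rewrite /= in p1 p2.
rewrite -(pd a u).
have n1 := nr_ge0 a; have n2 := nr_ge0 u.
have e1 := ler_norm cA; have e2 := ler_norm cU.
have f1 := normr_ge0 cA; have f2 := normr_ge0 cU.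
have : cA * nr a <= `|cA| * nr (a, u).
  apply: le_trans (_ : `|cA| * nr a <= _); first by rewrite ler_wpM2r.
  by rewrite ler_wpM2l.
have : cU * nr u <= `|cU| * nr (a, u).
  apply: le_trans (_ : `|cU| * nr u <= _); first by rewrite ler_wpM2r.
  by rewrite ler_wpM2l.
lra.
Qed.

Lemma main_cont :
  ((ann_U lm rm <> setT /\ centre_A lm rm <> setT) \/
   (ann_U lm rm = [set 0] /\ centre_A lm rm <> setT)) -> continuous D.
Proof.
move=> hcond.
have cen : centre_A lm rm <> setT by case: hcond => -[].
have ann0 : ann_U lm rm = [set 0].
  case: hcond => -[] // h _; case: ann_cases => // hT; by [].
have [x0 x0n] : exists x0 : X, x0 != 0.
  apply: Classical_Prop.NNPP => H; apply: cen; apply/seteqP; split => // x _ a.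
  have -> : x = 0 by apply/eqP; apply: contra_notT H => h; exists x.
  by rewrite lmx0 rmx0.
have nx0 : 0 < nr x0.
  rewrite lt_def nr_ge0 andbT; apply/eqP => /nr_eq0 h; by rewrite h eqxx in x0n.
have M0 : Ms = [set 0].
  case: M_cases => // MT; exfalso; apply: cen; apply/seteqP; split => // x _ a.
  have : Ms x by rewrite MT.
  by move=> /(_ a) [-> ->].
have F4 : forall x u v, lm (0, u) (rm x (0, v)) = 0.
  move=> x u v; have : Ms (rm (lm (0, u) x) (0, v)).
    move=> a; split.
      by rewrite -lrC L_a_0v rmZx.
    by rewrite R_0v_a.
  by rewrite M0 /= => h; rewrite -lrC.
have ann_el : forall x, (forall u, lm (0, u) x = 0) -> (forall u, rm x (0, u) = 0) -> x = 0.
  move=> x h1 h2; have : ann_U lm rm x by move=> u; split.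
  by rewrite ann0.
have fAD : forall a b : A, D (a + b, 0) = D (a, 0) + D (b, 0) by move=> a b; rewrite pdA dD.
have fAZ : forall (k : C) (a : A), D (k *: a, 0) = k *: D (a, 0) by move=> k a; rewrite -pzA dZ.
have fUD : forall a b : U, D (0, a + b) = D (0, a) + D (0, b) by move=> a b; rewrite pdU dD.
have fUZ : forall (k : C) (a : U), D (0, k *: a) = k *: D (0, a) by move=> k a; rewrite -pzU dZ.
case: NL_cases => [NL0|NLT].
-
  have NLe : forall x, (forall u, lm (0, u) x = 0) -> x = 0.
    by move=> x h; have : NL x by []; rewrite NL0.
  have XU0 : forall x v, rm x (0, v) = 0.
    by move=> x v; apply: NLe => u; exact: F4.
  have LAe : forall a x, lm (a, 0) x = theta a *: x.
    move=> a x; apply/eqP; rewrite -subr_eq0; apply/eqP; apply: NLe => u.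
    by rewrite lmxB lmZx L_0u_a subrr.
  have thb : forall a, nr (theta a) <= nr a.
    move=> a; have := lmb (a, 0) x0; rewrite LAe nrZ /= nr0 addr0.
    by rewrite ler_pM2r.
  have V0 : forall x, (forall a, rm x (a, 0) = theta a *: x) -> x = 0.
    have [V0|VT] : [set x | forall a, rm x (a, 0) = theta a *: x] = [set 0] \/
                   [set x | forall a, rm x (a, 0) = theta a *: x] = setT.
      apply: (@mk_sub A (fun a x => rm x (a, 0) - theta a *: x)).
    + move=> x; split => h a; first by rewrite h subrr.
      by apply/eqP; rewrite -subr_eq0; apply/eqP.
    + by move=> a x y; rewrite rmDx scalerDr opprD addrACA.
    + by move=> a k x; rewrite rmZx scalerBr !scalerA mulrC.
    + by move=> a; exists (nr a + nr (0 : U) + nr (theta a)) => x; exact: bRA.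
    + by move=> p x hx a; rewrite lrC hx lmZx.
    + move=> [b v] x hx a.
      rewrite (rm_split b v x) XU0 addr0 R_b_a hx thM hx scalerA mulrC.
      by [].
    + by move=> x hx; have : [set x | forall a, rm x (a, 0) = theta a *: x] x by []; rewrite V0.
    + exfalso; apply: cen; apply/seteqP; split => // x _ a.
      have : [set x | forall a, rm x (a, 0) = theta a *: x] x by rewrite VT.
      by move=> /(_ a) ->; rewrite LAe.
  have [cU hcU] : exists c : R, forall u, nr (D (0, u)) <= c * nr u.
    apply: (@closed_graph _ _ _ (fun u => D (0, u)) fUD fUZ).
    move=> s y hs hy; apply: V0 => a.
    have t1 : conv (fun n => rm (D (0, s n)) (a, 0) - theta a *: D (0, s n))
                   (rm y (a, 0) - theta a *: y).
      apply: (@conv_lip _ _ _ _ _ _ _ (nr a + nr (0 : U) + nr (theta a)) _ _ hy).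
        by rewrite !addr_ge0 // nr_ge0.
      by move=> n; rewrite zid2 -rmxB -scalerBr; exact: bRA.
    have t2 : conv (fun n => rm (D (0, s n)) (a, 0) - theta a *: D (0, s n)) 0.
      apply: (@conv_lip _ _ _ _ _ _ _ (nr (D (a, 0))) _ _ hs); first exact: nr_ge0.
      move=> n.
      have -> : rm (D (0, s n)) (a, 0) - theta a *: D (0, s n) = - lm (0, s n) (D (a, 0)).
        by rewrite -(D_id1 (s n) a) opprD addrA subrr add0r.
      rewrite !subr0 nrN mulrC; have := lmb (0, s n) (D (a, 0)).
      by rewrite /= nr0 add0r.
    by apply/eqP; rewrite -subr_eq0; apply/eqP; exact: (conv_uniq _ _ _ t1 t2).
  have [cA hcA] : exists c : R, forall a, nr (D (a, 0)) <= c * nr a.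
    apply: (@closed_graph _ _ _ (fun a => D (a, 0)) fAD fAZ).
    move=> s y hs hy; apply: NLe => u.
    have t1 : conv (fun n => lm (0, u) (D (s n, 0))) (lm (0, u) y).
      apply: (@conv_lip _ _ _ _ _ _ _ (nr (0 : A) + nr u) _ _ hy).
        by rewrite addr_ge0 // nr_ge0.
      by move=> n; rewrite -lmxB; exact: lmb.
    have t2 : conv (fun n => lm (0, u) (D (s n, 0))) 0.
      apply: (@conv_lip _ _ _ _ _ _ _ (2 * nr (D (0, u))) _ _ hs).
        by rewrite mulr_ge0 // nr_ge0.
      move=> n.
      have -> : lm (0, u) (D (s n, 0)) = theta (s n) *: D (0, u) - rm (D (0, u)) (s n, 0).
        by rewrite -(D_id1 u (s n)) addrC addKr.
      rewrite !subr0.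
      have q1 := nrD (theta (s n) *: D (0, u)) (- rm (D (0, u)) (s n, 0)).
      rewrite nrN nrZ in q1.
      have q2 := rmb (s n, 0) (D (0, u)); rewrite /= nr0 addr0 in q2.
      have q3 := thb (s n).
      have q4 := nr_ge0 (D (0, u)).
      nra.
    exact: (conv_uniq _ _ _ t1 t2).
  exact: (fin_cont _ _ hcA hcU).
-
  have UX0 : forall u x, lm (0, u) x = 0.
    by move=> u x; have h : NL x by rewrite NLT.
  have NR0 : NR = [set 0].
    case: NR_cases => // NRT; exfalso; move: x0n; apply/negP; rewrite negbK; apply/eqP.
    apply: ann_el => u; first exact: UX0.
    by have h : NR x0 by rewrite NRT.
  have NRe : forall x, (forall u, rm x (0, u) = 0) -> x = 0.
    by move=> x h; have : NR x by []; rewrite NR0.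
  have RAe : forall a x, rm x (a, 0) = theta a *: x.
    move=> a x; apply/eqP; rewrite -subr_eq0; apply/eqP; apply: NRe => u.
    by rewrite rmxB rmZx R_a_0v subrr.
  have thb : forall a, nr (theta a) <= nr a.
    move=> a; have := rmb (a, 0) x0; rewrite RAe nrZ /= nr0 addr0.
    by rewrite ler_pM2r.
  have V0 : forall x, (forall a, lm (a, 0) x = theta a *: x) -> x = 0.
    have [V0|VT] : [set x | forall a, lm (a, 0) x = theta a *: x] = [set 0] \/
                   [set x | forall a, lm (a, 0) x = theta a *: x] = setT.
      apply: (@mk_sub A (fun a x => lm (a, 0) x - theta a *: x)).
      + move=> x; split => h a; first by rewrite h subrr.
        by apply/eqP; rewrite -subr_eq0; apply/eqP.
      + by move=> a x y; rewrite lmDx scalerDr opprD addrACA.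
      + by move=> a k x; rewrite lmZx scalerBr !scalerA mulrC.
      + by move=> a; exists (nr a + nr (0 : U) + nr (theta a)) => x; exact: bLA.
      + move=> [b v] x hx a.
        by rewrite (lm_split b v x) UX0 !addr0 L_a_b hx thM hx scalerA.
      + by move=> p x hx a; rewrite -lrC hx rmZx.
    + by move=> x hx; have : [set x | forall a, lm (a, 0) x = theta a *: x] x by []; rewrite V0.
    + exfalso; apply: cen; apply/seteqP; split => // x _ a.
      have : [set x | forall a, lm (a, 0) x = theta a *: x] x by rewrite VT.
      by move=> /(_ a) ->; rewrite RAe.
  have [cU hcU] : exists c : R, forall u, nr (D (0, u)) <= c * nr u.
    apply: (@closed_graph _ _ _ (fun u => D (0, u)) fUD fUZ).
    move=> s y hs hy; apply: V0 => a.
    have t1 : conv (fun n => lm (a, 0) (D (0, s n)) - theta a *: D (0, s n))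
                   (lm (a, 0) y - theta a *: y).
      apply: (@conv_lip _ _ _ _ _ _ _ (nr a + nr (0 : U) + nr (theta a)) _ _ hy).
        by rewrite !addr_ge0 // nr_ge0.
      by move=> n; rewrite zid2 -lmxB -scalerBr; exact: bLA.
    have t2 : conv (fun n => lm (a, 0) (D (0, s n)) - theta a *: D (0, s n)) 0.
      apply: (@conv_lip _ _ _ _ _ _ _ (nr (D (a, 0))) _ _ hs); first exact: nr_ge0.
      move=> n.
      have -> : lm (a, 0) (D (0, s n)) - theta a *: D (0, s n) = - rm (D (a, 0)) (0, s n).
        by rewrite -(D_id2 a (s n)) opprD addrCA subrr addr0.
      rewrite !subr0 nrN mulrC; have := rmb (0, s n) (D (a, 0)).
      by rewrite /= nr0 add0r.
    by apply/eqP; rewrite -subr_eq0; apply/eqP; exact: (conv_uniq _ _ _ t1 t2).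
  have [cA hcA] : exists c : R, forall a, nr (D (a, 0)) <= c * nr a.
    apply: (@closed_graph _ _ _ (fun a => D (a, 0)) fAD fAZ).
    move=> s y hs hy; apply: NRe => u.
    have t1 : conv (fun n => rm (D (s n, 0)) (0, u)) (rm y (0, u)).
      apply: (@conv_lip _ _ _ _ _ _ _ (nr (0 : A) + nr u) _ _ hy).
        by rewrite addr_ge0 // nr_ge0.
      by move=> n; rewrite -rmxB; exact: rmb.
    have t2 : conv (fun n => rm (D (s n, 0)) (0, u)) 0.
      apply: (@conv_lip _ _ _ _ _ _ _ (2 * nr (D (0, u))) _ _ hs).
        by rewrite mulr_ge0 // nr_ge0.
      move=> n.
      have -> : rm (D (s n, 0)) (0, u) = theta (s n) *: D (0, u) - lm (s n, 0) (D (0, u)).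
        by rewrite -(D_id2 (s n) u) addrK.
      rewrite !subr0.
      have q1 := nrD (theta (s n) *: D (0, u)) (- lm (s n, 0) (D (0, u))).
      rewrite nrN nrZ in q1.
      have q2 := lmb (s n, 0) (D (0, u)); rewrite /= nr0 addr0 in q2.
      have q3 := thb (s n).
      have q4 := nr_ge0 (D (0, u)).
      nra.
    exact: (conv_uniq _ _ _ t1 t2).
  exact: (fin_cont _ _ hcA hcU).
Qed.

End Main.

Theorem corollary2p10 (R : realType)
  (A U X : completeNormedModType (R[i]))
  (mulA : A -> A -> A) (mulU : U -> U -> U) (theta : A -> R[i])
  (lm : A * U -> X -> X) (rm : X -> A * U -> X) (D : A * U -> X) :
  banach_algebra mulA ->
  banach_algebra mulU ->
  character mulA theta ->
  banach_bimodule (lau_mul theta mulA mulU) lm rm ->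
  simple_bimodule lm rm ->
  derivation (lau_mul theta mulA mulU) lm rm D ->
  ((ann_U lm rm <> setT /\ centre_A lm rm <> setT) \/
   (ann_U lm rm = [set 0] /\ centre_A lm rm <> setT)) ->
  continuous D.
Proof.
move=> hA hU hth hX hS hD hcond.
exact: (@main_cont R A U X mulA mulU theta lm rm D hA hU hth hX hS hD hcond).
Qed.
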